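(* Let $A$ be a unital $C^*$-algebra and $a\in A$. (i) If $\rho(a^*,a)=0$, then $\sigma(a)\subset\mathbb R$. (ii) If $a$ is invertible and $\rho(a^*,a^{-1})=0$, then $\sigma(a)\subseteq\{\lambda\in\mathbb C:|\lambda|=1\}$.
   Context: For $a,b\in A$ and $n\geq 0$ put $C_{a,b}^n\mathbf 1=\sum_{k=0}^n(-1)^k\binom{n}{k}a^{n-k}b^k$ (with $a^0=b^0=\mathbf 1$), and $\rho(a,b)=\limsup_{n\to\infty}\|C_{a,b}^n\mathbf 1\|^{1/n}$. *)

(* Defs.v *)
From Stdlib Require Import Reals List.
Open Scope R_scope.

Definition Cplx : Type := (R * R)%type.
Definition Cadd (z w : Cplx) : Cplx := (fst z + fst w, snd z + snd w).
Definition Cmul (z w : Cplx) : Cplx :=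
  (fst z * fst w - snd z * snd w, fst z * snd w + snd z * fst w).
Definition Cconj (z : Cplx) : Cplx := (fst z, - snd z).
Definition Cabs (z : Cplx) : R := sqrt (fst z ^ 2 + snd z ^ 2).
Definition RtoC (x : R) : Cplx := (x, 0).
Definition C1 : Cplx := (1, 0).

Record CstarAlg := {
  car :> Type;
  zero : car; one : car;
  add : car -> car -> car; opp : car -> car; mul : car -> car -> car;
  smul : Cplx -> car -> car; star : car -> car; norm : car -> R;
  addA : forall x y z, add x (add y z) = add (add x y) z;
  addC : forall x y, add x y = add y x;
  add0x : forall x, add zero x = x;
  addN : forall x, add x (opp x) = zero;
  mulA : forall x y z, mul x (mul y z) = mul (mul x y) z;
  mul1x : forall x, mul one x = x;
  mulx1 : forall x, mul x one = x;
  mulDl : forall x y z, mul (add x y) z = add (mul x z) (mul y z);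
  mulDr : forall x y z, mul x (add y z) = add (mul x y) (mul x z);
  smulDs : forall c d x, smul (Cadd c d) x = add (smul c x) (smul d x);
  smulDv : forall c x y, smul c (add x y) = add (smul c x) (smul c y);
  smulM : forall c d x, smul (Cmul c d) x = smul c (smul d x);
  smul1 : forall x, smul C1 x = x;
  smul_mull : forall c x y, smul c (mul x y) = mul (smul c x) y;
  smul_mulr : forall c x y, smul c (mul x y) = mul x (smul c y);
  starD : forall x y, star (add x y) = add (star x) (star y);
  starZ : forall c x, star (smul c x) = smul (Cconj c) (star x);
  starM : forall x y, star (mul x y) = mul (star y) (star x);
  starK : forall x, star (star x) = x;
  norm_ge0 : forall x, 0 <= norm x;
  norm_eq0 : forall x, norm x = 0 -> x = zero;
  norm_triangle : forall x y, norm (add x y) <= norm x + norm y;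
  normZ : forall c x, norm (smul c x) = Cabs c * norm x;
  normM : forall x y, norm (mul x y) <= norm x * norm y;
  norm1 : norm one = 1;
  cstar_id : forall x, norm (mul (star x) x) = norm x * norm x;
  complete : forall u : nat -> car,
    (forall eps, 0 < eps -> exists N, forall m n, (N <= m)%nat -> (N <= n)%nat ->
        norm (add (u m) (opp (u n))) < eps) ->
    exists l, forall eps, 0 < eps -> exists N, forall n, (N <= n)%nat ->
        norm (add (u n) (opp l)) < eps
}.

Arguments zero {_}. Arguments one {_}. Arguments add {_}. Arguments opp {_}.
Arguments mul {_}. Arguments smul {_}. Arguments star {_}. Arguments norm {_}.

Fixpoint apow {A : CstarAlg} (x : A) (n : nat) : A :=
  match n with O => one | S m => mul x (apow x m) end.

Definition Cab {A : CstarAlg} (a b : A) (n : nat) : A :=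
  fold_right add zero
    (map (fun k => smul (RtoC ((-1) ^ k * Binomial.C n k))
                        (mul (apow a (n - k)) (apow b k)))
         (seq 0 (S n))).

Definition nroot (x : R) (n : nat) : R :=
  if Rle_dec x 0 then 0 else Rpower x (/ INR n).

Definition is_limsup (u : nat -> R) (L : R) : Prop :=
  (forall eps, 0 < eps -> exists N, forall n, (N <= n)%nat -> u n <= L + eps) /\
  (forall eps, 0 < eps -> forall N, exists n, (N <= n)%nat /\ L - eps <= u n).

Definition rho_eq {A : CstarAlg} (a b : A) (L : R) : Prop :=
  is_limsup (fun n => nroot (norm (Cab a b n)) n) L.

Definition invertible {A : CstarAlg} (x : A) : Prop :=
  exists y, mul x y = one /\ mul y x = one.

Definition in_spectrum {A : CstarAlg} (a : A) (l : Cplx) : Prop :=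
  ~ invertible (add (smul l one) (opp a)).

(* Main.v *)
Require Import Defs.
From Stdlib Require Import Reals Lra Lia Psatz List Classical.
Open Scope R_scope.

Definition C0 : Cplx := (0, 0).
Definition Copp (z : Cplx) : Cplx := (- fst z, - snd z).
Definition Csub (z w : Cplx) : Cplx := Cadd z (Copp w).

Lemma Cplx_ring : ring_theory C0 Defs.C1 Cadd Cmul Csub Copp (@eq Cplx).
Proof.
  constructor; intros; repeat match goal with z : Cplx |- _ => destruct z end;
  unfold Csub, Cadd, Cmul, Copp, C0, Defs.C1; simpl; f_equal; ring.
Qed.
Add Ring Cring : Cplx_ring.

Fixpoint Cpow (z : Cplx) (n : nat) : Cplx :=
  match n with O => Defs.C1 | S m => Cmul z (Cpow z m) end.

Lemma Cabs_ge0 z : 0 <= Cabs z.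
Proof. apply sqrt_pos. Qed.

Lemma Cabs_mul z w : Cabs (Cmul z w) = Cabs z * Cabs w.
Proof.
  destruct z as [a b], w as [c d]; unfold Cabs, Cmul; simpl.
  rewrite <- sqrt_mult by nra. f_equal. ring.
Qed.

Lemma Cabs_RtoC r : Cabs (RtoC r) = Rabs r.
Proof.
  unfold Cabs, RtoC; simpl. rewrite <- sqrt_Rsqr_abs. f_equal. unfold Rsqr; ring.
Qed.

Lemma Cabs_conj z : Cabs (Cconj z) = Cabs z.
Proof. destruct z; unfold Cabs, Cconj; simpl. f_equal; ring. Qed.

Lemma Cabs_C1 : Cabs Defs.C1 = 1.
Proof. unfold Cabs, Defs.C1; simpl. replace (1*(1*1)+0*(0*1)) with 1 by ring. apply sqrt_1. Qed.

Lemma Cabs_pow z n : Cabs (Cpow z n) = Cabs z ^ n.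
Proof. induction n; simpl. apply Cabs_C1. rewrite Cabs_mul, IHn; ring. Qed.

Lemma Cabs_opp z : Cabs (Copp z) = Cabs z.
Proof. destruct z; unfold Cabs, Copp; simpl. f_equal; ring. Qed.

Lemma Cabs_pos z : z <> C0 -> 0 < Cabs z.
Proof.
  destruct z as [a b]; intro H; unfold Cabs; simpl. apply sqrt_lt_R0.
  destruct (Req_dec a 0); destruct (Req_dec b 0); subst.
  - exfalso; apply H; reflexivity.
  - nra. - nra. - nra.
Qed.

Lemma Cconj_pow z n : Cconj (Cpow z n) = Cpow (Cconj z) n.
Proof.
  induction n; simpl. unfold Cconj, Defs.C1; simpl; f_equal; ring.
  rewrite <- IHn. destruct z, (Cpow (r, r0) n); unfold Cconj, Cmul; simpl; f_equal; ring.
Qed.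

Lemma Cconj_mul z w : Cconj (Cmul z w) = Cmul (Cconj z) (Cconj w).
Proof. destruct z, w; unfold Cconj, Cmul; simpl; f_equal; ring. Qed.

Lemma pow_le1 x n : 0 <= x -> x <= 1 -> x ^ n <= 1.
Proof. intros H1 H2; induction n; simpl. lra. pose proof (pow_le x n H1). nra. Qed.
Arguments addA {_}. Arguments addC {_}. Arguments add0x {_}. Arguments addN {_}.
Arguments mulA {_}. Arguments mul1x {_}. Arguments mulx1 {_}. Arguments mulDl {_}. Arguments mulDr {_}.
Arguments smulDs {_}. Arguments smulDv {_}. Arguments smulM {_}. Arguments smul1 {_}.
Arguments smul_mull {_}. Arguments smul_mulr {_}. Arguments starD {_}. Arguments starZ {_}.
Arguments starM {_}. Arguments starK {_}. Arguments norm_ge0 {_}. Arguments norm_eq0 {_}.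
Arguments norm_triangle {_}. Arguments normZ {_}. Arguments normM {_}. Arguments norm1 {_}.
Arguments cstar_id {_}. Arguments complete {_}.

Notation sub x y := (add x (opp y)).

Section Alg.
End Alg.

Lemma addx0 {A : CstarAlg} (x : A) : add x zero = x.
Proof. rewrite addC; apply add0x. Qed.
Lemma addNx {A : CstarAlg} (x : A) : add (opp x) x = zero.
Proof. rewrite addC; apply addN. Qed.
Lemma addKl {A : CstarAlg} (x y : A) : add (opp x) (add x y) = y.
Proof. rewrite addA, addNx; apply add0x. Qed.
Lemma addKr {A : CstarAlg} (x y : A) : add x (add (opp x) y) = y.
Proof. rewrite addA, addN; apply add0x. Qed.
Lemma add_cancel {A : CstarAlg} (x y z : A) : add x y = add x z -> y = z.
Proof. intro H. rewrite <- (addKl x y), <- (addKl x z), H; reflexivity. Qed.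
Lemma add_idem {A : CstarAlg} (x : A) : add x x = x -> x = zero.
Proof. intro H. apply (add_cancel x). rewrite H, addx0; reflexivity. Qed.
Lemma opp_uniq {A : CstarAlg} (x y : A) : add x y = zero -> y = opp x.
Proof. intro H. apply (add_cancel x). rewrite H, addN; reflexivity. Qed.
Lemma oppK {A : CstarAlg} (x : A) : opp (opp x) = x.
Proof. symmetry; apply opp_uniq, addNx. Qed.
Lemma opp0 {A : CstarAlg} : opp (@zero A) = zero.
Proof. symmetry; apply opp_uniq; apply add0x. Qed.
Lemma addCA {A : CstarAlg} (x y z : A) : add x (add y z) = add y (add x z).
Proof. rewrite !addA, (addC x y); reflexivity. Qed.
Lemma addAC {A : CstarAlg} (x y z : A) : add (add x y) z = add (add x z) y.
Proof. rewrite <- !addA, (addC y z); reflexivity. Qed.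
Lemma opp_add {A : CstarAlg} (x y : A) : opp (add x y) = add (opp x) (opp y).
Proof.
  symmetry; apply opp_uniq.
  rewrite <- addA, (addCA y), addN, addx0, addN; reflexivity.
Qed.
Lemma sub_eq0 {A : CstarAlg} (x y : A) : sub x y = zero -> x = y.
Proof. intro H. rewrite <- (oppK y). apply opp_uniq. rewrite addC; exact H. Qed.
Lemma subKK {A : CstarAlg} (x y z : A) : add (sub x y) (sub y z) = sub x z.
Proof. rewrite <- addA, (addKl y); reflexivity. Qed.

Lemma mul0x {A : CstarAlg} (x : A) : mul zero x = zero.
Proof. apply add_idem. rewrite <- mulDl, add0x; reflexivity. Qed.
Lemma mulx0 {A : CstarAlg} (x : A) : mul x zero = zero.
Proof. apply add_idem. rewrite <- mulDr, add0x; reflexivity. Qed.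
Lemma mul_oppl {A : CstarAlg} (x y : A) : mul (opp x) y = opp (mul x y).
Proof. apply opp_uniq. rewrite <- mulDl, addN, mul0x; reflexivity. Qed.
Lemma mul_oppr {A : CstarAlg} (x y : A) : mul x (opp y) = opp (mul x y).
Proof. apply opp_uniq. rewrite <- mulDr, addN, mulx0; reflexivity. Qed.
Lemma mul_subl {A : CstarAlg} (x y z : A) : mul (sub x y) z = sub (mul x z) (mul y z).
Proof. rewrite mulDl, mul_oppl; reflexivity. Qed.
Lemma mul_subr {A : CstarAlg} (x y z : A) : mul x (sub y z) = sub (mul x y) (mul x z).
Proof. rewrite mulDr, mul_oppr; reflexivity. Qed.

Lemma smul0 {A : CstarAlg} (x : A) : smul C0 x = zero.
Proof. apply add_idem. rewrite <- smulDs. f_equal. unfold C0, Cadd; simpl; f_equal; ring. Qed.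
Lemma smulx0 {A : CstarAlg} (c : Cplx) : smul c (@zero A) = zero.
Proof. apply add_idem. rewrite <- smulDv, add0x; reflexivity. Qed.
Lemma smul_oppc {A : CstarAlg} c (x : A) : smul (Copp c) x = opp (smul c x).
Proof. apply opp_uniq. rewrite <- smulDs. replace (Cadd c (Copp c)) with C0 by ring. apply smul0. Qed.
Lemma smul_opp {A : CstarAlg} c (x : A) : smul c (opp x) = opp (smul c x).
Proof. apply opp_uniq. rewrite <- smulDv, addN. apply smulx0. Qed.
Lemma smul_sub {A : CstarAlg} c (x y : A) : smul c (sub x y) = sub (smul c x) (smul c y).
Proof. rewrite smulDv, smul_opp; reflexivity. Qed.
Lemma smul_subc {A : CstarAlg} c d (x : A) : smul (Csub c d) x = sub (smul c x) (smul d x).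
Proof. unfold Csub. rewrite smulDs, smul_oppc; reflexivity. Qed.
Lemma smul_smul {A : CstarAlg} c d (x : A) : smul c (smul d x) = smul (Cmul c d) x.
Proof. rewrite smulM; reflexivity. Qed.
Lemma opp_smul {A : CstarAlg} (x : A) : opp x = smul (Copp Defs.C1) x.
Proof. rewrite smul_oppc, smul1; reflexivity. Qed.

Lemma norm_zero {A : CstarAlg} : norm (@zero A) = 0.
Proof. rewrite <- (smul0 zero), normZ. unfold Cabs, C0; simpl.
  replace (0*(0*1)+0*(0*1)) with 0 by ring. rewrite sqrt_0; ring. Qed.
Lemma norm_opp {A : CstarAlg} (x : A) : norm (opp x) = norm x.
Proof. rewrite opp_smul, normZ, Cabs_opp, Cabs_C1; ring. Qed.
Lemma norm_sub_sym {A : CstarAlg} (x y : A) : norm (sub x y) = norm (sub y x).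
Proof. rewrite <- norm_opp, opp_add, oppK, addC; reflexivity. Qed.
Lemma norm_sub_tri {A : CstarAlg} (x y z : A) : norm (sub x z) <= norm (sub x y) + norm (sub y z).
Proof. rewrite <- (subKK x y z). apply norm_triangle. Qed.
Lemma norm_smul1 {A : CstarAlg} c : norm (smul c (@one A)) = Cabs c.
Proof. rewrite normZ, norm1; ring. Qed.

Lemma star_opp {A : CstarAlg} (x : A) : star (opp x) = opp (star x).
Proof. rewrite !opp_smul, starZ. f_equal. unfold Cconj, Copp, Defs.C1; simpl; f_equal; ring. Qed.
Lemma star_sub {A : CstarAlg} (x y : A) : star (sub x y) = sub (star x) (star y).
Proof. rewrite starD, star_opp; reflexivity. Qed.
Lemma star_one {A : CstarAlg} : star (@one A) = one.
Proof.
  transitivity (star (@mul A (star one) one)).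
  - rewrite starM, starK, mulx1; reflexivity.
  - rewrite mulx1, starK; reflexivity.
Qed.

Lemma norm_star_le {A : CstarAlg} (x : A) : norm x <= norm (star x).
Proof.
  destruct (Req_dec (norm x) 0) as [H|H]. rewrite H; apply norm_ge0.
  pose proof (norm_ge0 x). pose proof (norm_ge0 (star x)).
  assert (norm x * norm x <= norm (star x) * norm x) by (rewrite <- cstar_id; apply normM).
  nra.
Qed.
Lemma norm_star {A : CstarAlg} (x : A) : norm (star x) = norm x.
Proof. apply Rle_antisym. rewrite <- (starK x) at 2. apply norm_star_le. apply norm_star_le. Qed.

Lemma normM3 {A : CstarAlg} (x y z : A) : norm (mul (mul x y) z) <= norm x * norm y * norm z.
Proof.
  eapply Rle_trans; [apply normM|]. apply Rmult_le_compat_r; [apply norm_ge0|apply normM].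
Qed.

Lemma apow_r {A : CstarAlg} (x : A) n : apow x (S n) = mul (apow x n) x.
Proof. induction n; simpl. rewrite mul1x, mulx1; reflexivity. simpl in IHn. rewrite <- mulA, <- IHn; reflexivity. Qed.
Lemma norm_apow {A : CstarAlg} (x : A) n : norm (apow x n) <= norm x ^ n.
Proof. induction n; simpl. rewrite norm1; lra.
  eapply Rle_trans; [apply normM|]. apply Rmult_le_compat_l; [apply norm_ge0|exact IHn]. Qed.
Lemma sub_subl {A : CstarAlg} (x y : A) : sub (sub x y) x = opp y.
Proof. rewrite addAC, addN, add0x; reflexivity. Qed.

Fixpoint NS {A : CstarAlg} (w : A) (n : nat) : A :=
  match n with O => zero | S m => add (NS w m) (apow w m) end.

Lemma NS_left {A : CstarAlg} (u : A) n : mul (add one u) (NS (opp u) n) = sub one (apow (opp u) n).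
Proof.
  induction n; simpl. rewrite mulx0, addN; reflexivity.
  rewrite mulDr, IHn, mulDl, mul1x, mul_oppl, oppK.
  rewrite addA, <- (addA one (opp _) _), addNx, addx0; reflexivity.
Qed.
Lemma NS_right {A : CstarAlg} (u : A) n : mul (NS (opp u) n) (add one u) = sub one (apow (opp u) n).
Proof.
  induction n; simpl. rewrite mul0x, addN; reflexivity.
  replace (mul (opp u) (apow (opp u) n)) with (mul (apow (opp u) n) (opp u))
    by (change (mul (opp u) (apow (opp u) n)) with (apow (opp u) (S n)); rewrite apow_r; reflexivity).
  rewrite mulDl, IHn, mulDr, mulx1, mul_oppr, oppK.
  rewrite addA, <- (addA one (opp _) _), addNx, addx0; reflexivity.
Qed.

Lemma small_zero (x : R) : 0 <= x -> (forall eps, 0 < eps -> x < eps) -> x = 0.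
Proof. intros H1 H2. destruct (Req_dec x 0); auto. specialize (H2 x). lra. Qed.

Lemma NS_bound {A : CstarAlg} (u : A) n d : norm u < 1 ->
  norm (sub (NS (opp u) (d + n)) (NS (opp u) n)) <= norm u ^ n * (1 - norm u ^ d) / (1 - norm u).
Proof.
  intro Hr. pose proof (norm_ge0 u) as H0.
  induction d; simpl.
  - rewrite addN, norm_zero. unfold Rdiv. replace (1 - 1) with 0 by ring. rewrite Rmult_0_r, Rmult_0_l; lra.
  - rewrite addAC. eapply Rle_trans; [apply norm_triangle|].
    assert (norm (apow (opp u) (d + n)) <= norm u ^ (d + n)).
    { eapply Rle_trans; [apply norm_apow|]. rewrite norm_opp; lra. }
    rewrite pow_add in H.
    apply Rle_trans with (norm u ^ n * (1 - norm u ^ d) / (1 - norm u) + norm u ^ d * norm u ^ n); [lra|].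
    right. field. lra.
Qed.

Lemma neumann {A : CstarAlg} (u : A) : norm u < 1 -> invertible (add one u).
Proof.
  intro Hr. pose proof (norm_ge0 u) as H0.
  assert (Hpow : forall y, 0 < y -> exists N, forall n, (n >= N)%nat -> norm u ^ n < y).
  { intros y Hy. destruct (pow_lt_1_zero (norm u)) with y as [N HN]; [rewrite Rabs_right; lra|exact Hy|].
    exists N; intros n Hn. specialize (HN n Hn). rewrite Rabs_right in HN; auto.
    apply Rle_ge, pow_le; lra. }
  destruct (complete (NS (opp u))) as [l Hl].
  { intros eps He. destruct (Hpow (eps * (1 - norm u))) as [N HN]. nra.
    exists N. intros m n Hm Hn.
    assert (forall m n, (N <= n)%nat -> (n <= m)%nat -> norm (sub (NS (opp u) m) (NS (opp u) n)) < eps).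
    { clear m n Hm Hn. intros m n Hn Hnm. replace m with ((m - n) + n)%nat by lia.
      eapply Rle_lt_trans; [apply NS_bound; exact Hr|].
      specialize (HN n Hn). pose proof (pow_le (norm u) (m - n) H0).
      pose proof (pow_le (norm u) n H0).
      apply Rmult_lt_reg_r with (1 - norm u); [lra|]. unfold Rdiv.
      rewrite Rmult_assoc, Rinv_l by lra.
      assert (norm u ^ (m - n) <= 1). { apply pow_le1; lra. }
      nra. }
    destruct (Nat.le_ge_cases n m). apply H; lia. rewrite norm_sub_sym; apply H; lia. }
  assert (Hlim : forall (M : A) (P : nat -> A),
             (forall n, mul M (NS (opp u) n) = P n \/ mul (NS (opp u) n) M = P n) -> True) by auto.
  exists l; split.
  - apply sub_eq0, norm_eq0, small_zero; [apply norm_ge0|]. intros eps He.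
    destruct (Hpow (eps / 2)) as [N1 HN1]; [lra|].
    destruct (Hl (eps / (2 * (1 + norm u)))) as [N2 HN2]. apply Rdiv_lt_0_compat; lra.
    set (n := Nat.max N1 N2).
    eapply Rle_lt_trans; [apply (norm_sub_tri _ (mul (add one u) (NS (opp u) n)))|].
    rewrite <- mul_subr, NS_left.
    rewrite sub_subl, norm_opp.
    assert (norm (mul (add one u) (sub l (NS (opp u) n))) <= (1 + norm u) * (eps / (2 * (1 + norm u)))).
    { eapply Rle_trans; [apply normM|]. apply Rmult_le_compat; try apply norm_ge0.
      eapply Rle_trans; [apply norm_triangle|]. rewrite norm1; lra.
      rewrite norm_sub_sym. left. apply HN2. lia. }
    assert (norm (apow (opp u) n) < eps / 2).
    { eapply Rle_lt_trans; [apply norm_apow|]. rewrite norm_opp. apply HN1. lia. }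
    replace ((1 + norm u) * (eps / (2 * (1 + norm u)))) with (eps / 2) in H by (field; lra).
    lra.
  - apply sub_eq0, norm_eq0, small_zero; [apply norm_ge0|]. intros eps He.
    destruct (Hpow (eps / 2)) as [N1 HN1]; [lra|].
    destruct (Hl (eps / (2 * (1 + norm u)))) as [N2 HN2]. apply Rdiv_lt_0_compat; lra.
    set (n := Nat.max N1 N2).
    eapply Rle_lt_trans; [apply (norm_sub_tri _ (mul (NS (opp u) n) (add one u)))|].
    rewrite <- mul_subl, NS_right.
    rewrite sub_subl, norm_opp.
    assert (norm (mul (sub l (NS (opp u) n)) (add one u)) <= (1 + norm u) * (eps / (2 * (1 + norm u)))).
    { eapply Rle_trans; [apply normM|]. rewrite Rmult_comm. apply Rmult_le_compat; try apply norm_ge0.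
      eapply Rle_trans; [apply norm_triangle|]. rewrite norm1; lra.
      rewrite norm_sub_sym. left. apply HN2. lia. }
    assert (norm (apow (opp u) n) < eps / 2).
    { eapply Rle_lt_trans; [apply norm_apow|]. rewrite norm_opp. apply HN1. lia. }
    replace ((1 + norm u) * (eps / (2 * (1 + norm u)))) with (eps / 2) in H by (field; lra).
    lra.
Qed.

Definition Cinv (z : Cplx) : Cplx :=
  (fst z / (fst z ^ 2 + snd z ^ 2), - snd z / (fst z ^ 2 + snd z ^ 2)).

Lemma C0_sq (z : Cplx) : z <> C0 -> fst z ^ 2 + snd z ^ 2 <> 0.
Proof. destruct z as [p q]; simpl; intros H E. apply H. unfold C0. f_equal; nra. Qed.

Lemma Cinv_r z : z <> C0 -> Cmul z (Cinv z) = Defs.C1.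
Proof. intro H. pose proof (C0_sq z H). destruct z as [p q]; simpl in *.
  unfold Cmul, Cinv, Defs.C1; simpl; f_equal; field; intro E; apply H0; nra. Qed.
Lemma Cinv_l z : z <> C0 -> Cmul (Cinv z) z = Defs.C1.
Proof. intro H. rewrite <- (Cinv_r z H). ring. Qed.

Lemma Cabs_inv z : z <> C0 -> Cabs (Cinv z) = / Cabs z.
Proof.
  intro H. pose proof (Cabs_pos z H).
  assert (Cabs (Cinv z) * Cabs z = 1) by (rewrite <- Cabs_mul, Cinv_l, Cabs_C1; auto).
  apply (Rmult_eq_reg_r (Cabs z)). rewrite H1, Rinv_l; lra. lra.
Qed.

Lemma Cabs0_inv z : Cabs z <> 0 -> z <> C0.
Proof. intros H E; subst; apply H. unfold Cabs, C0; simpl. replace (0*(0*1)+0*(0*1)) with 0 by ring. apply sqrt_0. Qed.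

Lemma inv_mul {A : CstarAlg} (x y : A) : invertible x -> invertible y -> invertible (mul x y).
Proof.
  intros [x' [H1 H2]] [y' [H3 H4]]. exists (mul y' x'); split.
  - rewrite <- mulA, (mulA y), H3, mul1x; auto.
  - rewrite <- mulA, (mulA x'), H2, mul1x; auto.
Qed.

Lemma perturb {A : CstarAlg} (x y d : A) : mul x y = one -> mul y x = one ->
  norm d * norm y < 1 -> invertible (add x d).
Proof.
  intros H1 H2 H3.
  replace (add x d) with (mul x (add one (mul y d))).
  - apply inv_mul. exists y; auto. apply neumann.
    eapply Rle_lt_trans; [apply normM|]. lra.
  - rewrite mulDr, mulx1, mulA, H1, mul1x; reflexivity.
Qed.

Definition resolv {A : CstarAlg} (a : A) (m : Cplx) := invertible (sub (smul m one) a).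

Lemma shift_id {A : CstarAlg} (a : A) m n :
  add (sub (smul m one) a) (smul (Csub n m) one) = sub (smul n one) a.
Proof.
  rewrite addAC, <- smulDs. f_equal. f_equal. ring.
Qed.

Lemma resolv_perturb {A : CstarAlg} (a : A) m n y :
  mul (sub (smul m one) a) y = one -> mul y (sub (smul m one) a) = one ->
  Cabs (Csub n m) * norm y < 1 -> resolv a n.
Proof.
  intros H1 H2 H3. unfold resolv. rewrite <- (shift_id a m n).
  eapply perturb; eauto. rewrite norm_smul1; auto.
Qed.

Lemma resolv_big {A : CstarAlg} (a : A) m : norm a < Cabs m -> resolv a m.
Proof.
  intro H. pose proof (norm_ge0 a).
  assert (Hm : m <> C0) by (apply Cabs0_inv; lra).
  unfold resolv. eapply perturb with (y := smul (Cinv m) one).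
  - rewrite <- smul_mull, mul1x, smul_smul, Cinv_r, smul1; auto.
  - rewrite <- smul_mull, mul1x, smul_smul, Cinv_l, smul1; auto.
  - rewrite norm_opp, norm_smul1, Cabs_inv by auto.
    apply Rmult_lt_reg_r with (Cabs m). apply Cabs_pos; auto.
    rewrite Rmult_assoc, Rinv_l, Rmult_1_r, Rmult_1_l; auto. apply Rgt_not_eq, Cabs_pos; auto.
Qed.

Lemma resolv0 {A : CstarAlg} (a ainv : A) : mul a ainv = one -> mul ainv a = one -> resolv a C0.
Proof.
  intros H1 H2. unfold resolv. rewrite smul0, add0x. exists (opp ainv).
  rewrite mul_oppl, mul_oppr, oppK, mul_oppl, mul_oppr, oppK; auto.
Qed.

Definition gpath (w1 w2 v1 v2 t : R) : Cplx := (w1 + t * v1, w2 + t * v2).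

Lemma gpath_dist w1 w2 v1 v2 t s :
  Cabs (Csub (gpath w1 w2 v1 v2 t) (gpath w1 w2 v1 v2 s)) = Rabs (t - s) * Cabs (v1, v2).
Proof.
  replace (Csub (gpath w1 w2 v1 v2 t) (gpath w1 w2 v1 v2 s)) with (Cmul (RtoC (t - s)) (v1, v2)).
  rewrite Cabs_mul, Cabs_RtoC; auto.
  unfold Csub, Cmul, RtoC, gpath, Cadd, Copp; simpl; f_equal; ring.
Qed.

Lemma boundary {A : CstarAlg} (a : A) w1 w2 v1 v2 t1 T :
  let g := gpath w1 w2 v1 v2 in
  t1 <= T -> ~ resolv a (g t1) -> resolv a (g T) ->
  exists t0, t1 <= t0 < T /\ ~ resolv a (g t0) /\ forall t, t0 < t <= T -> resolv a (g t).
Proof.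
  intros g H1 H2 H3.
  set (E := fun t => t1 <= t <= T /\ ~ resolv a (g t)).
  destruct (completeness E) as [m [Hub Hlub]].
  { exists T. intros x [Hx _]. lra. }
  { exists t1. split; auto. lra. }
  assert (Ht1 : t1 <= m) by (apply Hub; split; auto; lra).
  assert (HmT : m <= T) by (apply Hlub; intros x [Hx _]; lra).
  assert (Hm : ~ resolv a (g m)).
  { intros [y [Hy1 Hy2]].
    pose proof (norm_ge0 y). pose proof (Cabs_ge0 (v1, v2)).
    set (eta := / ((Cabs (v1, v2) + 1) * (norm y + 1))).
    assert (Heta : 0 < eta) by (apply Rinv_0_lt_compat; nra).
    assert (Heta1 : eta * ((Cabs (v1, v2) + 1) * (norm y + 1)) = 1) by (apply Rinv_l; nra).
    assert (m <= m - eta); [|lra].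
    apply Hlub. intros s [Hs1 Hs2]. destruct (Rle_lt_dec s (m - eta)); auto.
    exfalso. apply Hs2. assert (s <= m) by (apply Hub; split; auto).
    eapply resolv_perturb; eauto. unfold g. rewrite gpath_dist.
    rewrite Rabs_left1 by lra.
    assert (0 <= m - s < eta) by lra.
    assert (0 <= Cabs (v1, v2) * norm y) by nra.
    assert ((m - s) * (Cabs (v1, v2) * norm y) <= eta * (Cabs (v1, v2) * norm y)) by nra.
    assert (eta * (Cabs (v1, v2) * norm y) < eta * ((Cabs (v1, v2) + 1) * (norm y + 1))).
    { apply Rmult_lt_compat_l; nra. }
    replace (- (s - m) * Cabs (v1, v2) * norm y) with ((m - s) * (Cabs (v1, v2) * norm y)) by ring.
    lra. }
  exists m. split; [split; auto|split; auto].
  - destruct (Req_dec m T); [subst; contradiction|lra].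
  - intros t Ht. apply NNPP; intro Hn. assert (t <= m) by (apply Hub; split; auto; lra). lra.
Qed.

Lemma sub_sub_sub {A : CstarAlg} (P Q R : A) : sub (sub P Q) (sub P R) = sub R Q.
Proof.
  rewrite opp_add, oppK, addAC, addKr; reflexivity.
Qed.

Lemma approx_eig {A : CstarAlg} (a : A) w1 w2 v1 v2 t0 T :
  let g := gpath w1 w2 v1 v2 in
  t0 < T -> ~ resolv a (g t0) -> (forall t, t0 < t <= T -> resolv a (g t)) ->
  forall delta, 0 < delta -> exists z : A, norm z = 1 /\
     norm (sub (mul a z) (smul (g t0) z)) <= delta.
Proof.
  intros g H1 H2 H3 delta Hd. apply NNPP; intro Hc.
  assert (Hz : forall z : A, norm z = 1 -> delta < norm (sub (mul a z) (smul (g t0) z))).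
  { intros z Hz. apply Rnot_le_lt. intro. apply Hc. exists z; auto. }
  clear Hc.
  set (V := Cabs (v1, v2)). assert (HV : 0 <= V) by apply Cabs_ge0.
  set (h := Rmin (T - t0) (delta / (4 * (V + 1)))).
  assert (Hh0 : 0 < h) by (apply Rmin_pos; [lra|apply Rdiv_lt_0_compat; lra]).
  assert (HhT : h <= T - t0) by apply Rmin_l.
  assert (Hhd : h * V <= delta / 4).
  { assert (h <= delta / (4 * (V + 1))) by apply Rmin_r.
    apply Rle_trans with (delta / (4 * (V + 1)) * V). apply Rmult_le_compat_r; lra.
    unfold Rdiv. rewrite Rinv_mult. apply Rle_trans with (delta * / 4 * ((V * / (V + 1)))); [right; ring|].
    assert (V * / (V + 1) <= 1). { apply Rmult_le_reg_r with (V + 1). lra. rewrite Rmult_assoc, Rinv_l; lra. }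
    assert (0 < delta * / 4) by (apply Rmult_lt_0_compat; [lra|apply Rinv_0_lt_compat; lra]). nra. }
  destruct (H3 (t0 + h)) as [y [Hy1 Hy2]]; [lra|].
  set (x := sub (smul (g (t0 + h)) one) a) in *.
  set (ny := norm y).
  assert (Hny : 0 < ny).
  { destruct (norm_ge0 y) as [Hp|Hp]; auto. symmetry in Hp. apply norm_eq0 in Hp.
    exfalso. rewrite Hp, mulx0 in Hy1. pose proof (@norm1 A). rewrite <- Hy1, norm_zero in H. lra. }
  set (z := smul (RtoC (/ ny)) y).
  assert (Hnz : norm z = 1).
  { unfold z. rewrite normZ, Cabs_RtoC, Rabs_right. unfold ny; field. fold ny; lra.
    left; apply Rinv_0_lt_compat; auto. }
  assert (Hxz : mul x z = smul (RtoC (/ ny)) one) by (unfold z; rewrite <- smul_mulr, Hy1; auto).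
  assert (Hid : sub (mul a z) (smul (g t0) z) = sub (smul (Csub (g (t0 + h)) (g t0)) z) (mul x z)).
  { replace (mul x z) with (sub (smul (g (t0 + h)) z) (mul a z)).
    rewrite smul_subc, sub_sub_sub; auto.
    unfold x. rewrite mul_subl, <- smul_mull, mul1x; auto. }
  specialize (Hz z Hnz). rewrite Hid in Hz.
  assert (norm (sub (smul (Csub (g (t0 + h)) (g t0)) z) (mul x z)) <= h * V + / ny).
  { eapply Rle_trans; [apply norm_triangle|]. rewrite norm_opp, Hxz, normZ, Hnz, normZ, norm1.
    unfold g. rewrite gpath_dist, Cabs_RtoC. fold V.
    replace (t0 + h - t0) with h by ring. rewrite !Rabs_right; try lra.
    left; apply Rinv_0_lt_compat; auto. }
  assert (Hinv : 3 * delta / 4 < / ny) by lra.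
  assert (Hny2 : ny * (3 * delta / 4) < 1).
  { apply Rmult_lt_reg_l with (/ ny). apply Rinv_0_lt_compat; auto.
    rewrite <- Rmult_assoc, Rinv_l, Rmult_1_l, Rmult_1_r; lra. }
  apply H2. eapply resolv_perturb; eauto.
  unfold g. rewrite gpath_dist. fold V. replace (t0 - (t0 + h)) with (- h) by ring.
  rewrite Rabs_Ropp, Rabs_right by lra. fold ny.
  assert (0 <= h * V) by nra. nra.
Qed.

Definition approx {A : CstarAlg} (e : A -> R) (w : A) (s : Cplx) : Prop :=
  exists K, forall z, norm z <= 1 ->
    norm (sub (mul (mul (star z) w) z) (smul s (mul (star z) z))) <= K * e z.

Lemma add_sub_add {A : CstarAlg} (P Q R S : A) : add (sub P Q) (sub R S) = sub (add P R) (add Q S).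
Proof. rewrite opp_add, <- !addA. f_equal. rewrite !addA. f_equal. apply addC. Qed.

Lemma approx_add {A : CstarAlg} (e : A -> R) w1 w2 s1 s2 :
  approx e w1 s1 -> approx e w2 s2 -> approx e (add w1 w2) (Cadd s1 s2).
Proof.
  intros [K1 H1] [K2 H2]. exists (K1 + K2). intros z Hz.
  rewrite mulDr, mulDl, smulDs, <- add_sub_add.
  eapply Rle_trans; [apply norm_triangle|]. specialize (H1 z Hz); specialize (H2 z Hz). lra.
Qed.

Lemma approx_zero {A : CstarAlg} (e : A -> R) : approx e zero C0.
Proof. exists 0. intros z _. rewrite mulx0, mul0x, smul0, addN, norm_zero. lra. Qed.

Lemma approx_smul {A : CstarAlg} (e : A -> R) w s r :
  approx e w s -> approx e (smul r w) (Cmul r s).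
Proof.
  intros [K H]. exists (Cabs r * K). intros z Hz.
  rewrite <- smul_mulr, <- smul_mull, <- smul_smul, <- smul_sub, normZ, Rmult_assoc.
  apply Rmult_le_compat_l; [apply Cabs_ge0|auto].
Qed.

Lemma approx_fold {A : CstarAlg} (e : A -> R) (f : nat -> A) (g : nat -> Cplx) l :
  (forall k, In k l -> approx e (f k) (g k)) ->
  approx e (fold_right add zero (map f l)) (fold_right Cadd C0 (map g l)).
Proof.
  induction l; simpl; intro H. apply approx_zero.
  apply approx_add; auto.
Qed.

Lemma bound_le1 (K e n : R) : 0 <= K * e -> 0 <= n -> n <= 1 -> K * e * n <= K * e.
Proof. intros. nra. Qed.

Lemma approx_mono {A : CstarAlg} (e : A -> R) (b c : A) beta gamma :
  (forall z, 0 <= e z) ->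
  (exists Kc, 0 <= Kc /\ forall z, norm z <= 1 -> norm (sub (mul c z) (smul gamma z)) <= Kc * e z) ->
  (exists Kb, 0 <= Kb /\ forall z, norm z <= 1 ->
       norm (sub (mul (star z) b) (smul beta (star z))) <= Kb * e z) ->
  forall p q, approx e (mul (apow b p) (apow c q)) (Cmul (Cpow beta p) (Cpow gamma q)).
Proof.
  intros He [Kc [HKc Hc]] [Kb [HKb Hb]] p q.
  assert (Pc : forall q, exists K, 0 <= K /\ forall z, norm z <= 1 ->
     norm (sub (mul (apow c q) z) (smul (Cpow gamma q) z)) <= K * e z).
  { clear q. induction q as [|q [K [HK IH]]].
    - exists 0. split; [lra|]. intros z _. simpl. rewrite mul1x, smul1, addN, norm_zero.
      specialize (He z); lra.
    - exists (norm c * K + Cabs (Cpow gamma q) * Kc). split.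
      { pose proof (norm_ge0 c); pose proof (Cabs_ge0 (Cpow gamma q)); nra. }
      intros z Hz. simpl.
      eapply Rle_trans; [apply (norm_sub_tri _ (mul c (smul (Cpow gamma q) z)))|].
      rewrite <- mulA, <- mul_subr, <- smul_mulr.
      replace (Cmul gamma (Cpow gamma q)) with (Cmul (Cpow gamma q) gamma) by ring.
      rewrite <- smul_smul, <- smul_sub, normZ.
      specialize (IH z Hz); specialize (Hc z Hz).
      pose proof (normM c (sub (mul (apow c q) z) (smul (Cpow gamma q) z))).
      pose proof (norm_ge0 c); pose proof (Cabs_ge0 (Cpow gamma q)).
      specialize (He z). nra. }
  assert (Pb : forall p, exists K, 0 <= K /\ forall z, norm z <= 1 ->
     norm (sub (mul (star z) (apow b p)) (smul (Cpow beta p) (star z))) <= K * e z).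
  { clear p q Pc. induction p as [|p [K [HK IH]]].
    - exists 0. split; [lra|]. intros z _. simpl. rewrite mulx1, smul1, addN, norm_zero.
      specialize (He z); lra.
    - exists (K * norm b + Cabs (Cpow beta p) * Kb). split.
      { pose proof (norm_ge0 b); pose proof (Cabs_ge0 (Cpow beta p)); nra. }
      intros z Hz. rewrite apow_r. simpl Cpow.
      eapply Rle_trans; [apply (norm_sub_tri _ (mul (smul (Cpow beta p) (star z)) b))|].
      rewrite mulA, <- mul_subl, <- smul_mull.
      replace (Cmul beta (Cpow beta p)) with (Cmul (Cpow beta p) beta) by ring.
      rewrite <- smul_smul, <- smul_sub, normZ.
      specialize (IH z Hz); specialize (Hb z Hz).
      pose proof (normM (sub (mul (star z) (apow b p)) (smul (Cpow beta p) (star z))) b).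
      pose proof (norm_ge0 b); pose proof (Cabs_ge0 (Cpow beta p)).
      specialize (He z). nra. }
  destruct (Pc q) as [K1 [HK1 H1]]. destruct (Pb p) as [K2 [HK2 H2]].
  exists (norm b ^ p * K1 + Cabs (Cpow gamma q) * K2). intros z Hz.
  rewrite mulA, <- (mulA (mul (star z) (apow b p))).
  eapply Rle_trans; [apply (norm_sub_tri _ (mul (mul (star z) (apow b p)) (smul (Cpow gamma q) z)))|].
  rewrite <- mul_subr, <- smul_mulr.
  replace (Cmul (Cpow beta p) (Cpow gamma q)) with (Cmul (Cpow gamma q) (Cpow beta p)) by ring.
  rewrite <- smul_smul, <- smul_sub, normZ, smul_mull, <- mul_subl.
  specialize (H1 z Hz); specialize (H2 z Hz). specialize (He z).
  assert (A1 : norm (mul (mul (star z) (apow b p)) (sub (mul (apow c q) z) (smul (Cpow gamma q) z)))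
               <= norm b ^ p * (K1 * e z)).
  { eapply Rle_trans; [apply normM|]. apply Rmult_le_compat; try apply norm_ge0.
    eapply Rle_trans; [apply normM|]. rewrite norm_star.
    pose proof (norm_apow b p). pose proof (norm_ge0 z). pose proof (norm_ge0 (apow b p)). nra. auto. }
  assert (A2 : norm (mul (sub (mul (star z) (apow b p)) (smul (Cpow beta p) (star z))) z) <= K2 * e z).
  { eapply Rle_trans; [apply normM|]. pose proof (norm_ge0 z).
    pose proof (norm_ge0 (sub (mul (star z) (apow b p)) (smul (Cpow beta p) (star z)))). nra. }
  pose proof (Cabs_ge0 (Cpow gamma q)). nra.
Qed.

Lemma norm_le_sub {A : CstarAlg} (x y : A) : norm y <= norm x + norm (sub x y).
Proof.
  rewrite <- (addKr x y) at 1. rewrite <- (norm_opp (sub x y)), opp_add, oppK.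
  apply norm_triangle.
Qed.

Lemma le_eps (x y K : R) : (forall d, 0 < d -> x <= y + K * d) -> x <= y.
Proof.
  intro H. destruct (Rle_dec x y) as [|Hn]; auto. exfalso.
  set (d := (x - y) / (2 * (Rabs K + 1))).
  assert (Hd : 0 < d) by (apply Rdiv_lt_0_compat; [lra|pose proof (Rabs_pos K); lra]).
  specialize (H d Hd).
  assert (K * d <= Rabs K * d) by (apply Rmult_le_compat_r; [lra|apply RRle_abs]).
  assert (Rabs K * d < (x - y)).
  { unfold d. pose proof (Rabs_pos K).
    replace (Rabs K * ((x - y) / (2 * (Rabs K + 1)))) with ((x - y) * (Rabs K / (2 * (Rabs K + 1)))) by (field; lra).
    assert (Rabs K / (2 * (Rabs K + 1)) < 1).
    { apply Rmult_lt_reg_r with (2 * (Rabs K + 1)). lra. unfold Rdiv. rewrite Rmult_assoc, Rinv_l; lra. }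
    assert (0 < x - y) by lra. nra. }
  lra.
Qed.

Lemma approx_lower {A : CstarAlg} (e : A -> R) w s :
  (forall d, 0 < d -> exists z : A, norm z = 1 /\ e z <= d) ->
  (forall z, 0 <= e z) -> approx e w s -> Cabs s <= norm w.
Proof.
  intros Hz He [K H]. apply (le_eps _ _ (Rabs K)). intros d Hd.
  destruct (Hz d Hd) as [z [Hz1 Hz2]].
  specialize (H z (Req_le _ _ Hz1)).
  pose proof (norm_le_sub (mul (mul (star z) w) z) (smul s (mul (star z) z))).
  rewrite normZ, cstar_id, Hz1, Rmult_1_r, Rmult_1_r in H0.
  assert (norm (mul (mul (star z) w) z) <= norm w).
  { eapply Rle_trans; [apply normM3|]. rewrite norm_star, Hz1. lra. }
  assert (K * e z <= Rabs K * d).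
  { specialize (He z). pose proof (Rabs_pos K). pose proof (RRle_abs K).
    apply Rle_trans with (Rabs K * e z). nra. apply Rmult_le_compat_l; auto. }
  lra.
Qed.

Definition csum (f : nat -> Cplx) (n : nat) : Cplx := fold_right Cadd C0 (map f (seq 0 n)).

Lemma fold_Cadd_init (l : list Cplx) x : fold_right Cadd x l = Cadd (fold_right Cadd C0 l) x.
Proof. induction l; simpl. ring. rewrite IHl; ring. Qed.

Lemma csum_last f n : csum f (S n) = Cadd (csum f n) (f n).
Proof.
  unfold csum. rewrite seq_S, map_app, fold_right_app. simpl.
  rewrite fold_Cadd_init. f_equal. ring.
Qed.

Lemma csum_first f n : csum f (S n) = Cadd (f 0%nat) (csum (fun k => f (S k)) n).
Proof.
  unfold csum. simpl. f_equal. rewrite <- seq_shift, map_map. reflexivity.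
Qed.

Lemma csum_ext f g n : (forall k, (k < n)%nat -> f k = g k) -> csum f n = csum g n.
Proof.
  induction n; intro H. reflexivity.
  rewrite !csum_last, IHn, H; auto.
Qed.

Lemma csum_add f g n : csum (fun k => Cadd (f k) (g k)) n = Cadd (csum f n) (csum g n).
Proof. induction n. unfold csum; simpl; ring. rewrite !csum_last, IHn; ring. Qed.

Lemma csum_scale c f n : csum (fun k => Cmul c (f k)) n = Cmul c (csum f n).
Proof. induction n. unfold csum; simpl; ring. rewrite !csum_last, IHn; ring. Qed.

Fixpoint B (n k : nat) : nat :=
  match n, k with
  | _, O => 1%nat
  | O, S _ => 0%nat
  | S n', S k' => (B n' k' + B n' (S k'))%nat
  end.

Lemma B_gt n k : (n < k)%nat -> B n k = 0%nat.
Proof.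
  revert k; induction n; intros k H; destruct k; simpl; try lia; auto.
  rewrite !IHn; lia.
Qed.

Lemma B_n0 n : B n 0 = 1%nat.
Proof. destruct n; reflexivity. Qed.

Lemma B_nn n : B n n = 1%nat.
Proof. induction n; simpl; auto. rewrite IHn, B_gt; lia. Qed.

Lemma C_n0 n : Binomial.C n 0 = 1.
Proof. unfold Binomial.C. rewrite Nat.sub_0_r. simpl. field. apply INR_fact_neq_0. Qed.
Lemma C_nn n : Binomial.C n n = 1.
Proof. unfold Binomial.C. rewrite Nat.sub_diag. simpl. field. apply INR_fact_neq_0. Qed.

Lemma C_B n k : (k <= n)%nat -> Binomial.C n k = INR (B n k).
Proof.
  revert k; induction n; intros k H.
  - destruct k; [|lia]. rewrite C_n0; reflexivity.
  - destruct k. rewrite C_n0; reflexivity.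
    destruct (Nat.eq_dec k n).
    + subst. rewrite C_nn, B_nn; reflexivity.
    + rewrite <- pascal by lia. simpl B. rewrite plus_INR, <- !IHn by lia. reflexivity.
Qed.

Lemma RtoC_mul a b : RtoC (a * b) = Cmul (RtoC a) (RtoC b).
Proof. unfold RtoC, Cmul; simpl; f_equal; ring. Qed.
Lemma RtoC_add a b : RtoC (a + b) = Cadd (RtoC a) (RtoC b).
Proof. unfold RtoC, Cadd; simpl; f_equal; ring. Qed.
Lemma RtoC_m1 : RtoC (-1) = Copp Defs.C1.
Proof. unfold RtoC, Copp, Defs.C1; simpl; f_equal; ring. Qed.
Lemma RtoC_1 : RtoC 1 = Defs.C1.
Proof. reflexivity. Qed.
Lemma RtoC_0 : RtoC 0 = C0.
Proof. reflexivity. Qed.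

Definition tb (x y : Cplx) (n k : nat) : Cplx :=
  Cmul (RtoC ((-1) ^ k * INR (B n k))) (Cmul (Cpow x (n - k)) (Cpow y k)).

Lemma tb_step x y n k :
  tb x y (S n) (S k) = Cadd (Cmul x (tb x y n (S k))) (Cmul (Copp y) (tb x y n k)).
Proof.
  unfold tb. simpl B. simpl pow. rewrite plus_INR.
  replace (S n - S k)%nat with (n - k)%nat by lia.
  destruct (Nat.lt_ge_cases k n).
  - replace (n - k)%nat with (S (n - S k)) by lia. simpl Cpow.
    rewrite !RtoC_mul, RtoC_add, RtoC_m1. ring.
  - destruct (Nat.eq_dec k n).
    + subst. rewrite B_nn, (B_gt n (S n)) by lia. rewrite !Nat.sub_diag.
      replace (n - S n)%nat with 0%nat by lia. simpl Cpow.
      simpl INR. rewrite !RtoC_mul, RtoC_add, RtoC_m1, RtoC_1, RtoC_0. ring.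
    + rewrite !(B_gt n) by lia. simpl INR.
      rewrite !RtoC_mul, RtoC_add, RtoC_m1, RtoC_0. ring.
Qed.

Lemma binom_C x y n : csum (tb x y n) (S n) = Cpow (Csub x y) n.
Proof.
  induction n.
  - unfold csum, tb; simpl. unfold RtoC, C0, Cadd, Cmul, Defs.C1; simpl; f_equal; ring.
  - rewrite csum_first.
    rewrite (csum_ext _ (fun k => Cadd (Cmul x (tb x y n (S k))) (Cmul (Copp y) (tb x y n k))))
      by (intros; apply tb_step).
    rewrite csum_add, !csum_scale.
    assert (E1 : csum (tb x y n) (S (S n)) = Cadd (tb x y n 0) (csum (fun k => tb x y n (S k)) (S n)))
      by apply csum_first.
    rewrite csum_last in E1.
    assert (E2 : tb x y n (S n) = C0).
    { unfold tb. rewrite B_gt by lia. simpl INR. rewrite Rmult_0_r, RtoC_0. ring. }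
    assert (E3 : tb x y (S n) 0 = Cmul x (tb x y n 0)).
    { unfold tb. simpl B. simpl pow. rewrite !Nat.sub_0_r. change (Cpow x (S n)) with (Cmul x (Cpow x n)). rewrite B_n0. ring. }
    rewrite E3. simpl Cpow. rewrite <- IHn.
    rewrite E2 in E1.
    replace (csum (fun k => tb x y n (S k)) (S n)) with
      (Csub (Cadd (csum (tb x y n) (S n)) C0) (tb x y n 0)) by (rewrite E1; ring).
    ring.
Qed.

Lemma rho_contra {A : CstarAlg} (b c : A) D : 0 < D ->
  (forall n, D ^ n <= norm (Cab b c n)) -> ~ rho_eq b c 0.
Proof.
  intros HD Hn [Hup _]. destruct (Hup (D / 2)) as [N HN]; [lra|].
  specialize (HN (S N) (Nat.le_succ_diag_r N)). specialize (Hn (S N)).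
  pose proof (pow_lt D (S N) HD).
  unfold nroot in HN. destruct (Rle_dec (norm (Cab b c (S N))) 0); [lra|].
  assert (D <= Rpower (norm (Cab b c (S N))) (/ INR (S N))).
  { replace D with (Rpower (D ^ S N) (/ INR (S N))) at 1.
    apply Rle_Rpower_l. left; apply Rinv_0_lt_compat, lt_0_INR; lia. split; auto.
    rewrite <- Rpower_pow, Rpower_mult, Rinv_r, Rpower_1; auto.
    apply not_0_INR; lia. }
  lra.
Qed.

Lemma Cab_lower {A : CstarAlg} (e : A -> R) (b c : A) beta gamma :
  (forall z, 0 <= e z) ->
  (exists Kc, 0 <= Kc /\ forall z, norm z <= 1 -> norm (sub (mul c z) (smul gamma z)) <= Kc * e z) ->
  (exists Kb, 0 <= Kb /\ forall z, norm z <= 1 ->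
       norm (sub (mul (star z) b) (smul beta (star z))) <= Kb * e z) ->
  (forall d, 0 < d -> exists z : A, norm z = 1 /\ e z <= d) ->
  forall n, Cabs (Csub beta gamma) ^ n <= norm (Cab b c n).
Proof.
  intros He Hc Hb Hz n. rewrite <- Cabs_pow, <- binom_C.
  apply (approx_lower e); auto.
  replace (csum (tb beta gamma n) (S n)) with
    (fold_right Cadd C0 (map (fun k => Cmul (RtoC ((-1) ^ k * Binomial.C n k))
                         (Cmul (Cpow beta (n - k)) (Cpow gamma k))) (seq 0 (S n)))).
  - unfold Cab. apply approx_fold. intros k _. apply approx_smul. apply approx_mono; auto.
  - apply (csum_ext (fun k => Cmul (RtoC ((-1) ^ k * Binomial.C n k))
                         (Cmul (Cpow beta (n - k)) (Cpow gamma k)))).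
    intros k Hk. unfold tb. rewrite C_B by lia. reflexivity.
Qed.

Lemma spec_contra {A : CstarAlg} (a b c : A) beta gamma mu :
  let e := fun z : A => norm (sub (mul a z) (smul mu z)) in
  (forall d, 0 < d -> exists z : A, norm z = 1 /\ e z <= d) ->
  (exists Kc, 0 <= Kc /\ forall z, norm z <= 1 -> norm (sub (mul c z) (smul gamma z)) <= Kc * e z) ->
  (exists Kb, 0 <= Kb /\ forall z, norm z <= 1 ->
       norm (sub (mul (star z) b) (smul beta (star z))) <= Kb * e z) ->
  0 < Cabs (Csub beta gamma) -> ~ rho_eq b c 0.
Proof.
  intros e Hz Hc Hb HD. apply (rho_contra b c (Cabs (Csub beta gamma))); auto.
  apply (Cab_lower e); auto. intro z; apply norm_ge0.
Qed.

Lemma Hb_star {A : CstarAlg} (a : A) mu :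
  exists Kb, 0 <= Kb /\ forall z, norm z <= 1 ->
   norm (sub (mul (star z) (star a)) (smul (Cconj mu) (star z))) <= Kb * norm (sub (mul a z) (smul mu z)).
Proof.
  exists 1. split; [lra|]. intros z _. rewrite <- starM, <- starZ, <- star_sub, norm_star. lra.
Qed.

Lemma Cabs_ge_snd p q : Rabs q <= Cabs (p, q).
Proof.
  unfold Cabs; simpl. rewrite <- sqrt_Rsqr_abs. apply sqrt_le_1_alt. unfold Rsqr. nra.
Qed.

Lemma Cabs_scale t p q : Cabs (t * p, t * q) = Rabs t * Cabs (p, q).
Proof.
  replace (t * p, t * q) with (Cmul (RtoC t) (p, q)). rewrite Cabs_mul, Cabs_RtoC; auto.
  unfold Cmul, RtoC; simpl; f_equal; ring.
Qed.

Theorem theorem3p5 (A : CstarAlg) (a : A) :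
  (rho_eq (star a) a 0 -> forall l, in_spectrum a l -> snd l = 0) /\
  (forall ainv : A, mul a ainv = one -> mul ainv a = one ->
     rho_eq (star a) ainv 0 -> forall l, in_spectrum a l -> Cabs l = 1).
Proof.
  split.
  - intros Hrho [p q] Hl. simpl. apply NNPP; intro Hq.
    assert (Hq' : 0 < Rabs q) by (apply Rabs_pos_lt; auto).
    set (T := (norm a + 1) / Rabs q + 1).
    assert (HT1 : 1 <= T).
    { unfold T. pose proof (norm_ge0 a). assert (0 <= (norm a + 1) / Rabs q) by (apply Rmult_le_pos; [lra|left; apply Rinv_0_lt_compat; lra]). lra. }
    destruct (boundary a p 0 0 q 1 T) as [t0 [Ht0 [Hm Hr]]]; auto.
    { replace (gpath p 0 0 q 1) with (p, q) by (unfold gpath; f_equal; ring). exact Hl. }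
    { apply resolv_big. eapply Rlt_le_trans; [|apply Cabs_ge_snd]. simpl.
      replace (0 + T * q) with (T * q) by ring. rewrite Rabs_mult, (Rabs_right T) by lra.
      unfold T. pose proof (norm_ge0 a).
      replace (((norm a + 1) / Rabs q + 1) * Rabs q) with (norm a + 1 + Rabs q) by (field; lra). lra. }
    pose proof (approx_eig a p 0 0 q t0 T (proj2 Ht0) Hm Hr) as Hz.
    set (mu := gpath p 0 0 q t0) in *.
    apply (spec_contra a (star a) a (Cconj mu) mu mu Hz).
    + exists 1. split; [lra|]. intros; lra.
    + apply Hb_star.
    + apply Cabs_pos. unfold mu, gpath, Csub, Cconj, Cadd, Copp, C0; simpl. intro E.
      injection E; intros E2 _. assert (t0 * q = 0) by lra.
      apply Rmult_integral in H. destruct H; lra.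
    + exact Hrho.
  - intros ainv H1 H2 Hrho l Hl. apply NNPP; intro Hne.
    assert (HC : forall mu, ~ resolv a mu -> Cabs mu <> 1 ->
       (forall d, 0 < d -> exists z : A, norm z = 1 /\ norm (sub (mul a z) (smul mu z)) <= d) -> False).
    { intros mu Hmu Hmu1 Hz.
      assert (Hm0 : mu <> C0) by (intro E; subst; apply Hmu; eapply resolv0; eauto).
      apply (spec_contra a (star a) ainv (Cconj mu) (Cinv mu) mu Hz); auto.
      - exists (Cabs (Cinv mu) * norm ainv). split.
        { pose proof (Cabs_ge0 (Cinv mu)); pose proof (norm_ge0 ainv); nra. }
        intros z _.
        replace (sub (mul ainv z) (smul (Cinv mu) z)) with
          (smul (Copp (Cinv mu)) (mul ainv (sub (mul a z) (smul mu z)))).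
        + rewrite normZ, Cabs_opp. eapply Rle_trans.
          apply Rmult_le_compat_l; [apply Cabs_ge0|apply normM]. right; ring.
        + rewrite mul_subr, mulA, H2, mul1x, <- smul_mulr, smul_sub, smul_smul.
          replace (Cmul (Copp (Cinv mu)) mu) with (Copp Defs.C1)
            by (rewrite <- (Cinv_l mu Hm0); ring).
          rewrite !smul_oppc, smul1, oppK, addC. reflexivity.
      - apply Hb_star.
      - destruct mu as [p q]. pose proof (C0_sq (p, q) Hm0) as Hr. cbn [fst snd] in Hr.
        assert (Hr1 : p ^ 2 + q ^ 2 <> 1).
        { intro E. apply Hmu1. unfold Cabs; cbn [fst snd]. rewrite E; apply sqrt_1. }
        apply Cabs_pos. unfold Csub, Cconj, Cinv, Cadd, Copp, C0; cbn [fst snd]. intro E.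
        pose proof (f_equal fst E) as E1; pose proof (f_equal snd E) as E2; cbn [fst snd] in E1, E2.
        assert (p * (p ^ 2 + q ^ 2 - 1) = 0).
        { replace (p * (p ^ 2 + q ^ 2 - 1)) with ((p + - (p / (p ^ 2 + q ^ 2))) * (p ^ 2 + q ^ 2)) by (field; auto).
          rewrite E1; ring. }
        assert (q * (p ^ 2 + q ^ 2 - 1) = 0).
        { replace (q * (p ^ 2 + q ^ 2 - 1)) with (- (- q + - (- q / (p ^ 2 + q ^ 2))) * (p ^ 2 + q ^ 2)) by (field; auto).
          rewrite E2; ring. }
        apply Rmult_integral in H; apply Rmult_integral in H0.
        destruct H; [|lra]. destruct H0; [|lra]. subst. apply Hr; ring. }
    destruct l as [p q].
    assert (Hl0 : (p, q) <> C0) by (intro E; rewrite E in Hl; apply Hl; eapply resolv0; eauto).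
    destruct (Rlt_or_le 1 (Cabs (p, q))) as [Hgt|Hle].
    + set (T := norm a + 1).
      assert (HT1 : 1 <= T) by (unfold T; pose proof (norm_ge0 a); lra).
      assert (Hg : forall t, gpath 0 0 p q t = (t * p, t * q)) by (intro; unfold gpath; f_equal; ring).
      destruct (boundary a 0 0 p q 1 T) as [t0 [Ht0 [Hm Hr]]]; auto.
      { rewrite Hg, !Rmult_1_l. exact Hl. }
      { apply resolv_big. rewrite Hg, Cabs_scale, Rabs_right by lra. unfold T.
        pose proof (norm_ge0 a). nra. }
      pose proof (approx_eig a 0 0 p q t0 T (proj2 Ht0) Hm Hr) as Hz.
      apply (HC _ Hm); auto. rewrite Hg, Cabs_scale, Rabs_right by lra. nra.
    + assert (Hlt : Cabs (p, q) < 1) by (destruct Hle; auto; contradiction).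
      assert (Hg : forall t, gpath p q (- p) (- q) t = ((1 - t) * p, (1 - t) * q))
        by (intro; unfold gpath; f_equal; ring).
      destruct (boundary a p q (- p) (- q) 0 1) as [t0 [Ht0 [Hm Hr]]]; auto. lra.
      { rewrite Hg. replace (1 - 0) with 1 by ring. rewrite !Rmult_1_l. exact Hl. }
      { rewrite Hg. replace (1 - 1) with 0 by ring. rewrite !Rmult_0_l. eapply resolv0; eauto. }
      pose proof (approx_eig a p q (- p) (- q) t0 1 (proj2 Ht0) Hm Hr) as Hz.
      apply (HC _ Hm); auto. rewrite Hg, Cabs_scale, Rabs_right by lra.
      pose proof (Cabs_ge0 (p, q)). nra.
Qed.
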